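(* Let $\hat q$ be an $m\times m$ and $\hat p$ an $s\times s$ parametric matrix, let $M$ be an $n\times m$ matrix over $\mathfrak R$ and $N$ an $m\times s$ $(\hat q,\hat p)$-Manin matrix over $\mathfrak R$ such that every $N_{ij}$ commutes with every $M_{kl}$. Let $I=(i_1,\dots,i_r)$ be a multi-index with entries in $\{1,\dots,n\}$ and $K=(k_1\le\dots\le k_r)$ a nondecreasing multi-index with entries in $\{1,\dots,s\}$. Then $$\widehat{\mathrm{rper}}_{\hat p}((MN)_{IK})=\sum_J\widehat{\mathrm{rper}}_{\hat q}(M_{IJ})\,\widehat{\mathrm{rper}}_{\hat p}(N_{JK}),$$ the sum over all nondecreasing multi-indices $J=(j_1\le\dots\le j_r)$ with entries in $\{1,\dots,m\}$. In particular, if $m=n=s$, then $\widehat{\mathrm{rper}}_{\hat p}(MN)=\sum_J\widehat{\mathrm{rper}}_{\hat q}(M_{[n]J})\,\widehat{\mathrm{rper}}_{\hat p}(N_{J[n]})$, where $[n]=(1,2,\dots,n)$.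
   Context: $\mathfrak R$ is an associative unital algebra over $\mathbb C$. A parametric $n\times n$ matrix is a matrix $\hat q=(q_{ij})$ of nonzero complex numbers with $q_{ij}q_{ji}=1$, $q_{ii}=1$. For parametric $\hat q$ ($m\times m$) and $\hat p$ ($s\times s$), an $m\times s$ matrix $N$ over $\mathfrak R$ is a $(\hat q,\hat p)$-Manin matrix if $N_{ik}N_{jk}=q_{ji}N_{jk}N_{ik}$ for $i<j$ and all $k$, and $N_{ik}N_{jl}-q_{ji}p_{kl}N_{jl}N_{ik}+p_{kl}N_{il}N_{jk}-q_{ji}N_{jk}N_{il}=0$ for $i<j$, $k<l$. For a nondecreasing multi-index $J=(j_1\le\dots\le j_r)$ and $\sigma\in S_r$, $\mu(\hat p,J,\sigma)=\prod_{s<t,\ \sigma(s)>\sigma(t)}p_{j_{\sigma(t)}j_{\sigma(s)}}$. For a matrix $X$, any multi-index $I=(i_1,\dots,i_r)$ and nondecreasing $J$, $\mathrm{rper}_{\hat p}(X_{IJ})=\sum_{\sigma\in S_r}\mu(\hat p,J,\sigma)X_{i_1,j_{\sigma(1)}}\cdots X_{i_r,j_{\sigma(r)}}$, and $\widehat{\mathrm{rper}}_{\hat p}(X_{IJ})=\frac1{v(J)}\mathrm{rper}_{\hat p}(X_{IJ})$ where $v(J)=\prod_{a}|\{t:j_t=a\}|!$. $\widehat{\mathrm{rper}}_{\hat p}(X)$ for square $X$ is the case $I=J=(1,\dots,n)$. *)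

(* Defs.v *)
From HB Require Import structures.
From mathcomp Require Import all_boot all_order all_algebra all_fingroup.
From mathcomp Require Import complex.
From mathcomp Require Import Rstruct.
Set Implicit Arguments. Unset Strict Implicit. Unset Printing Implicit Defensive.
Import Order.TTheory GRing.Theory Num.Theory.
Local Open Scope ring_scope.

Definition CC : Type := complex Rdefinitions.R.
HB.instance Definition _ := GRing.Field.on CC.

Definition parametric (n : nat) (q : 'M[CC]_n) : Prop :=
  (forall i j, q i j != 0) /\ (forall i j, q i j * q j i = 1) /\ (forall i, q i i = 1).

Definition manin (A : algType CC) (m s : nat) (q : 'M[CC]_m) (p : 'M[CC]_s)
  (N : 'M[A]_(m, s)) : Prop :=
  (forall (i j : 'I_m) (k : 'I_s), (i < j)%N ->
     N i k * N j k = q j i *: (N j k * N i k)) /\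
  (forall (i j : 'I_m) (k l : 'I_s), (i < j)%N -> (k < l)%N ->
     N i k * N j l - (q j i * p k l) *: (N j l * N i k)
     + p k l *: (N i l * N j k) - q j i *: (N j k * N i l) = 0).

Definition nondecr (r s : nat) (J : 'I_r -> 'I_s) : bool :=
  [forall a : 'I_r, forall b : 'I_r, (a <= b)%N ==> (J a <= J b)%N].

Definition mu (s r : nat) (p : 'M[CC]_s) (J : 'I_r -> 'I_s) (sg : 'S_r) : CC :=
  \prod_(ab : 'I_r * 'I_r | (ab.1 < ab.2)%N && (sg ab.2 < sg ab.1)%N)
     p (J (sg ab.2)) (J (sg ab.1)).

Definition rper (A : algType CC) (a b r : nat) (p : 'M[CC]_b) (X : 'M[A]_(a, b))
  (I : 'I_r -> 'I_a) (J : 'I_r -> 'I_b) : A :=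
  \sum_(sg : 'S_r) mu p J sg *: \prod_(t < r) X (I t) (J (sg t)).

Definition vmult (r b : nat) (J : 'I_r -> 'I_b) : nat :=
  (\prod_(c : 'I_b) (#|[set t : 'I_r | J t == c]|)`!)%N.

Definition rperhat (A : algType CC) (a b r : nat) (p : 'M[CC]_b) (X : 'M[A]_(a, b))
  (I : 'I_r -> 'I_a) (J : 'I_r -> 'I_b) : A :=
  ((vmult J)%:R)^-1 *: rper p X I J.

Definition rperhat_sq (A : algType CC) (n : nat) (p : 'M[CC]_n) (X : 'M[A]_n) : A :=
  rperhat p X id id.

(* Main.v *)
Require Import Defs.
From HB Require Import structures.
From mathcomp Require Import all_boot all_order all_algebra all_fingroup.
From mathcomp Require Import complex Rstruct zify.
Set Implicit Arguments. Unset Strict Implicit. Unset Printing Implicit Defensive.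
Import GRing.Theory Num.Theory.
Local Open Scope ring_scope.


Section Swap.
Variables (r a : nat) (Ha : (a.+1 < r)%N).
Definition a0 : 'I_r := Ordinal (ltnW Ha).
Definition a1 : 'I_r := Ordinal Ha.
Definition sw : 'S_r := tperm a0 a1.

Lemma sw_lt (x y : 'I_r) : ~~ ((x == a0) && (y == a1)) -> ~~ ((x == a1) && (y == a0)) ->
  (sw x < sw y)%N = (x < y)%N.
Proof.
have E : forall z : 'I_r, sw z = if z == a0 then a1 else if z == a1 then a0 else z.
  by move=> z; rewrite /sw permE.
rewrite !E -!(inj_eq val_inj) /=.
case: eqP; case: eqP; case: eqP; case: eqP => //= *; lia.
Qed.

Lemma swK (x : 'I_r) : sw (sw x) = x.
Proof. by rewrite /sw tpermK. Qed.

Lemma sw_a0 : sw a0 = a1. Proof. by rewrite /sw tpermL. Qed.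
Lemma sw_a1 : sw a1 = a0. Proof. by rewrite /sw tpermR. Qed.

Lemma swsw : (sw * sw = 1)%g.
Proof. by apply/permP => x; rewrite permM perm1 swK. Qed.

Lemma a01 : a0 != a1.
Proof. by rewrite -(inj_eq val_inj) /= neq_ltn ltnSn. Qed.

Lemma mu_swap_lt (b : nat) (p : 'M[CC]_b) (K : 'I_r -> 'I_b) (sg : 'S_r) :
  (sg a0 < sg a1)%N ->
  mu p K (sw * sg)%g = p (K (sg a0)) (K (sg a1)) * mu p K sg.
Proof.
move=> hlt; rewrite /mu.
have hinj : injective (fun ab : 'I_r * 'I_r => (sw ab.1, sw ab.2)).
  by move=> [x y] [x' y'] [] /(can_inj swK) -> /(can_inj swK) ->.
rewrite (reindex_inj hinj) /=.
under eq_bigr do rewrite !permM !swK.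
rewrite (bigD1 (a1, a0)) /=; last first.
  by rewrite !permM !swK sw_a0 sw_a1 /= ltnSn hlt.
congr (_ * _); apply: eq_bigl => [[x y]] /=; rewrite !permM !swK.
case: (boolP ((x == a0) && (y == a1))) => [/andP[/eqP -> /eqP ->]|h1].
  rewrite sw_a0 sw_a1 /=.
  have -> : (sg a1 < sg a0)%N = false by apply/negbTE; rewrite -leqNgt ltnW.
  by rewrite !andbF.
case: (boolP ((x == a1) && (y == a0))) => [/andP[/eqP -> /eqP ->]|h2].
  rewrite sw_a0 sw_a1 eqxx /= andbF. by rewrite ltnNge leqnSn.
rewrite sw_lt //.
have -> : ((x, y) != (a1, a0)) = true.
  by apply/negP => /eqP [ex ey]; move: h2; rewrite ex ey !eqxx.
by rewrite andbT.
Qed.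

Lemma mu_swap (b : nat) (p : 'M[CC]_b) (K : 'I_r -> 'I_b) (sg : 'S_r) :
  (forall i j, p i j * p j i = 1) ->
  mu p K (sw * sg)%g = p (K (sg a0)) (K (sg a1)) * mu p K sg.
Proof.
move=> hp.
case: (ltngtP (sg a0) (sg a1)) => h.
- exact: mu_swap_lt.
- have h' : ((sw * sg)%g a0 < (sw * sg)%g a1)%N by rewrite !permM sw_a0 sw_a1.
  have := mu_swap_lt p K h'; rewrite mulgA swsw mul1g !permM sw_a0 sw_a1 => ->.
  by rewrite mulrA hp mul1r.
- by move/val_inj/perm_inj: h => /eqP; rewrite (negbTE a01).
Qed.
End Swap.

Section Swap2.
Variables (r a : nat) (Ha : (a.+1 < r)%N).
Local Notation a0 := (a0 Ha).
Local Notation a1 := (a1 Ha).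
Local Notation sw := (sw Ha).
Local Notation ins := (insubd a0).

Lemma prod_split (R : pzRingType) (h : 'I_r -> R) :
  \prod_(t < r) h t =
  (\prod_(0 <= t < a) h (ins t)) * (h a0 * h a1) * \prod_(a.+2 <= t < r) h (ins t).
Proof.
rewrite (eq_bigr (fun t : 'I_r => h (ins t))); last by move=> t _; rewrite valKd.
rewrite -(big_mkord xpredT (fun t => h (ins t))).
rewrite (@big_cat_nat _ _ _ a) //=; last by rewrite ltnW // ltnW.
rewrite (@big_ltn _ _ _ a r); last by rewrite ltnW.
rewrite (@big_ltn _ _ _ a.+1 r) //.
have -> : ins a = a0 by apply: val_inj; rewrite val_insubd /= ltnW.
have -> : ins a.+1 = a1 by apply: val_inj; rewrite val_insubd /= Ha.
by rewrite !mulrA.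
Qed.

Lemma sw_ins (t : nat) : (t < a)%N || (a.+2 <= t < r)%N -> sw (ins t) = ins t.
Proof.
move=> ht; rewrite /sw permE /=.
have h0 : (ins t == a0) = false.
  apply/negbTE; rewrite -(inj_eq val_inj) /= val_insubd.
  case: ifP => /= ht'; case/orP: ht => [|/andP[]]; lia.
have h1 : (ins t == a1) = false.
  apply/negbTE; rewrite -(inj_eq val_inj) /= val_insubd.
  case: ifP => /= ht'; case/orP: ht => [|/andP[]]; lia.
by rewrite h0 h1.
Qed.

Lemma sum_split_sw (V : nmodType) (f : 'S_r -> V) :
  \sum_(sg : 'S_r) f sg = \sum_(sg : 'S_r | (sg a0 < sg a1)%N) (f sg + f (sw * sg)%g).
Proof.
rewrite (bigID (fun sg : 'S_r => (sg a0 < sg a1)%N)) /= big_split /=; congr (_ + _).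
rewrite (reindex_inj (mulgI sw)) /=; apply: eq_bigl => sg.
rewrite !permM sw_a0 sw_a1 -leqNgt leq_eqVlt.
case: eqP => //= /val_inj/perm_inj/eqP; by rewrite (negbTE (a01 Ha)).
Qed.
End Swap2.


Lemma lin4 (R : comRingType) (V : lmodType R) (X Y Z W : V) (c d : R) :
  X - (c * d) *: Y + d *: Z - c *: W = 0 -> X + d *: Z = c *: (W + d *: Y).
Proof.
move=> H; apply/eqP; rewrite -subr_eq0 -H scalerDr scalerA opprD !addrA.
by rewrite (addrAC X (- _)) (addrAC _ (- ((c * d) *: Y))).
Qed.

Lemma loc_rel (A : algType CC) (m b : nat) (q : 'M[CC]_m) (p : 'M[CC]_b)
  (N : 'M[A]_(m, b)) : parametric q -> parametric p -> manin q p N ->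
  forall (x y : 'I_m) (k l : 'I_b), (k <= l)%N ->
  N y k * N x l + p k l *: (N y l * N x k) =
  q x y *: (N x k * N y l + p k l *: (N x l * N y k)).
Proof.
move=> [_ [hq1 hq2]] [_ [hp1 hp2]] [m1 m2] x y k l hkl.
case: (ltngtP x y) => hxy.
-
  case: (ltngtP k l) => hkl'.
  + have H' := lin4 (m2 _ _ _ _ hxy hkl').
    by rewrite H' scalerA hq1 scale1r.
  + by move: hkl; rewrite leqNgt hkl'.
  + rewrite (val_inj hkl') hp2 !scale1r (m1 _ _ _ hxy) scalerDr !scalerA.
    by rewrite hq1 !scale1r.
-
  case: (ltngtP k l) => hkl'.
  + exact: (lin4 (m2 _ _ _ _ hxy hkl')).
  + by move: hkl; rewrite leqNgt hkl'.
  + rewrite (val_inj hkl') hp2 !scale1r (m1 _ _ _ hxy) -scalerDr; done.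
- by rewrite (val_inj hxy) hq2 scale1r.
Qed.


Lemma rper_ext (A : algType CC) a b r (p : 'M[CC]_b) (X : 'M[A]_(a,b))
  (I1 I2 : 'I_r -> 'I_a) (J1 J2 : 'I_r -> 'I_b) :
  I1 =1 I2 -> J1 =1 J2 -> rper p X I1 J1 = rper p X I2 J2.
Proof.
move=> hI hJ; rewrite /rper /mu; apply: eq_bigr => sg _; congr (_ *: _).
  by apply: eq_bigr => ab _; rewrite !hJ.
by apply: eq_bigr => t _; rewrite hI hJ.
Qed.

Lemma lin_LR (A : algType CC) (L R u v : A) (c d : CC) :
  d *: (L * u * R) + (c * d) *: (L * v * R) = d *: (L * (u + c *: v) * R).
Proof.
by rewrite mulrDr mulrDl scalerDr -scalerAr -scalerAl scalerA [d * c]mulrC.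
Qed.

Section FSwap.
Variables (r a : nat) (Ha : (a.+1 < r)%N).
Local Notation a0 := (a0 Ha).
Local Notation a1 := (a1 Ha).
Local Notation sw := (sw Ha).
Local Notation ins := (insubd a0).

Lemma prod_split_N (A : algType CC) m b (N : 'M[A]_(m,b)) (K : 'I_r -> 'I_b)
  (j : 'I_r -> 'I_m) (sg : 'S_r) (e1 e2 : bool) :
  \prod_(t < r) N ((if e1 then j \o sw else j) t) (K ((if e2 then (sw * sg)%g else sg) t)) =
  (\prod_(0 <= t < a) N (j (ins t)) (K (sg (ins t)))) *
  (N (j (if e1 then a1 else a0)) (K (sg (if e2 then a1 else a0))) *
   N (j (if e1 then a0 else a1)) (K (sg (if e2 then a0 else a1)))) *
  (\prod_(a.+2 <= t < r) N (j (ins t)) (K (sg (ins t)))).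
Proof.
rewrite (prod_split Ha); congr (_ * _ * _).
- apply: eq_big_nat => t ht.
  have hs : sw (ins t) = ins t by apply: sw_ins; rewrite (andP ht).2.
  by case: e1; case: e2; rewrite /= ?permM ?hs.
- by case: e1; case: e2; rewrite /= ?permM ?sw_a0 ?sw_a1.
- apply: eq_big_nat => t ht.
  have hs : sw (ins t) = ins t by apply: sw_ins; rewrite ht orbT.
  by case: e1; case: e2; rewrite /= ?permM ?hs.
Qed.

Lemma rper_sw (A : algType CC) (m b : nat) (q : 'M[CC]_m) (p : 'M[CC]_b)
  (N : 'M[A]_(m, b)) (K : 'I_r -> 'I_b) (j : 'I_r -> 'I_m) :
  parametric q -> parametric p -> manin q p N -> nondecr K ->
  rper p N (fun t => j (sw t)) K = q (j a0) (j a1) *: rper p N j K.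
Proof.
move=> hq hp hN hK.
have hp12 : forall i j, p i j * p j i = 1 by case: hp => _ [].
rewrite /rper !(sum_split_sw Ha) scaler_sumr; apply: eq_bigr => sg hsg.
have hkl : (K (sg a0) <= K (sg a1))%N.
  by move/forallP: hK => /(_ (sg a0)) /forallP /(_ (sg a1)) /implyP; apply; apply: ltnW.
rewrite !(mu_swap Ha _ _ hp12).
have E := prod_split_N N K j sg.
have E1 := E true false; have E2 := E true true; have E3 := E false false; have E4 := E false true.
rewrite /= in E1 E2 E3 E4.
rewrite E1 E2 E3 E4 lin_LR (loc_rel hq hp hN) // -scalerAr -scalerAl scalerA.
by rewrite lin_LR scalerA mulrC.
Qed.
End FSwap.


Lemma incr_id (r : nat) (sg : 'S_r) :
  (forall t : 'I_r, (t.+1 < r)%N -> (sg t < sg (insubd t t.+1))%N) -> sg = 1%g.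
Proof.
move=> h.
have up : forall k (t : 'I_r), nat_of_ord t = k -> (k <= sg t)%N.
  elim=> [|k IH] t ht; first by [].
  have hk : (k < r)%N by have := ltn_ord t; lia.
  pose t' := insubd t k.
  have vt' : nat_of_ord t' = k by rewrite val_insubd hk.
  have := h t'; rewrite vt' -ht ltn_ord => /(_ isT).
  have -> : insubd t' (val t) = t by rewrite valKd.
  by have := IH _ vt'; lia.
have down : forall d (t : 'I_r), (nat_of_ord t + d = r.-1)%N -> (sg t <= t)%N.
  elim=> [|d IH] t ht.
    by rewrite addn0 in ht; rewrite ht -ltnS prednK ?ltn_ord //; apply: leq_ltn_trans (ltn_ord t).
  have ht1 : (t.+1 < r)%N by have := ltn_ord t; lia.
  pose t' := insubd t t.+1.
  have vt' : nat_of_ord t' = t.+1 by rewrite val_insubd ht1.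
  have := IH t'; rewrite vt' => /(_ ltac:(lia)).
  by have := h t ht1; rewrite -/t'; lia.
apply/permP => t; rewrite perm1; apply: val_inj; apply/eqP; rewrite eqn_leq.
rewrite (up (val t) t erefl) andbT.
have hr := ltn_ord t.
by have := down (r.-1 - t)%N t ltac:(lia).
Qed.

Definition Wt (r : nat) (sg : 'S_r) : nat := (\sum_(t : 'I_r) t * sg t)%N.

Lemma Wt_bound (r : nat) (sg : 'S_r) : (Wt sg <= r * r * r)%N.
Proof.
rewrite /Wt.
have : (\sum_(t < r) t * sg t <= \sum_(t < r) r * r)%N.
  by apply: leq_sum => t _; apply: leq_mul; exact: ltnW.
by rewrite sum_nat_const card_ord mulnA.
Qed.

Lemma Wt_sw (r a : nat) (Ha : (a.+1 < r)%N) (sg : 'S_r) :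
  (sg (a1 Ha) < sg (a0 Ha))%N -> (Wt sg < Wt (sw Ha * sg)%g)%N.
Proof.
move=> hd; rewrite /Wt.
rewrite [X in (_ < X)%N](reindex_inj (can_inj (swK Ha))) /=.
under [X in (_ < X)%N]eq_bigr do rewrite permM swK.
have split2 : forall F : 'I_r -> nat, (\sum_(t < r) F t =
   F (a0 Ha) + (F (a1 Ha) + \sum_(t < r | (t != a0 Ha) && (t != a1 Ha)) F t))%N.
  move=> F; rewrite (bigD1 (a0 Ha)) // (bigD1 (a1 Ha)) /=; last by rewrite eq_sym a01.
  by congr (_ + (_ + _)); apply: eq_bigl => t; rewrite andbC.
rewrite !split2 sw_a0 sw_a1.
set S1 := bigop _ _ _; set S2 := bigop _ _ _.
have -> : S2 = S1.
  apply: eq_bigr => t /andP[h0 h1].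
  by rewrite /sw permE /= (negbTE h0) (negbTE h1).
rewrite /=; nia.
Qed.

Lemma mu1 (s r : nat) (p : 'M[CC]_s) (J : 'I_r -> 'I_s) : mu p J 1%g = 1.
Proof.
rewrite /mu big_pred0 // => [[x y]] /=; rewrite !perm1.
by apply/negbTE/andP => -[]; lia.
Qed.

Lemma rper_perm (A : algType CC) (m b r : nat) (q : 'M[CC]_m) (p : 'M[CC]_b)
  (N : 'M[A]_(m, b)) (K : 'I_r -> 'I_b) :
  parametric q -> parametric p -> manin q p N -> nondecr K ->
  forall (sg : 'S_r) (j : 'I_r -> 'I_m),
  rper p N (fun t => j (sg t)) K = mu q j sg *: rper p N j K.
Proof.
move=> hq hp hN hK sg.
have hq12 : forall i j, q i j * q j i = 1 by case: hq => _ [].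
suff H : forall n (sg : 'S_r), (r * r * r - Wt sg < n)%N -> forall j : 'I_r -> 'I_m,
  rper p N (fun t => j (sg t)) K = mu q j sg *: rper p N j K by exact: H.
elim=> [|n IH] {}sg hn j; first by [].
case: (boolP [forall t : 'I_r, (t.+1 < r)%N ==> (sg t < sg (insubd t t.+1))%N]).
  move/forallP => h.
  have -> : sg = 1%g by apply: incr_id => t ht; exact: (implyP (h t) ht).
  by rewrite mu1 scale1r; apply: rper_ext => // t; rewrite perm1.
rewrite negb_forall => /existsP [t]; rewrite negb_imply -leqNgt => /andP [Ha hle].
have e0 : a0 Ha = t by apply: val_inj.
have e1 : a1 Ha = insubd t t.+1 by apply: val_inj; rewrite val_insubd Ha.
have hd : (sg (a1 Ha) < sg (a0 Ha))%N.
  rewrite e0 e1 ltn_neqAle hle andbT; apply/negP => /eqP /val_inj /perm_inj.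
  move/(congr1 val); rewrite val_insubd Ha /=; lia.
set sg' := (sw Ha * sg)%g.
have hsg : sg = (sw Ha * sg')%g by rewrite /sg' mulgA swsw mul1g.
have hW := Wt_sw hd; have hB := Wt_bound sg'.
have IH' := IH sg' ltac:(rewrite -/sg' in hW; lia).
rewrite hsg (mu_swap Ha _ _ hq12) -scalerA -IH'.
rewrite -(rper_sw Ha (fun u => j (sg' u)) hq hp hN hK).
by apply: rper_ext => // u; rewrite permM.
Qed.


Section Stab.
Variables (r b : nat) (J : 'I_r -> 'I_b).
Definition Fb (c : 'I_b) : {set 'I_r} := [set t | J t == c].
Definition stab : {set 'S_r} := [set tau : 'S_r | [forall t, J (tau t) == J t]].
Definition Phi (tau : 'S_r) : {ffun 'I_b -> 'S_r} := [ffun c => restr_perm (Fb c) tau].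

Lemma stab_N (tau : 'S_r) c : tau \in stab -> tau \in 'N(Fb c | 'P)%g.
Proof.
rewrite inE => /forallP h; apply/astabsP => x.
by rewrite /= apermE !inE (eqP (h x)).
Qed.

Lemma Phi_inj : {in stab &, injective Phi}.
Proof.
move=> t1 t2 h1 h2 e; apply/permP => x.
have := congr1 (fun g : {ffun 'I_b -> 'S_r} => g (J x) x) e; rewrite /= !ffunE.
have hx : x \in Fb (J x) by rewrite inE.
by rewrite !restr_permE // ?stab_N.
Qed.

Lemma Phi_im : Phi @: stab = [set g : {ffun 'I_b -> 'S_r} | [forall c, perm_on (Fb c) (g c)]].
Proof.
apply/setP => g; rewrite inE; apply/imsetP/forallP.
  by move=> [tau _ ->] c; rewrite ffunE restr_perm_on.
move=> hg.
have hJ : forall t, J (g (J t) t) = J t.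
  move=> t; have := perm_closed t (hg (J t)); rewrite !inE eqxx => /eqP //.
have finj : injective (fun t => g (J t) t).
  move=> t1 t2 /= e; have e1 : J t1 = J t2 by rewrite -hJ e hJ.
  by move: e; rewrite e1 => /perm_inj.
exists (perm finj).
  by rewrite inE; apply/forallP => t; rewrite permE hJ.
have hs : perm finj \in stab by rewrite inE; apply/forallP => t; rewrite permE hJ.
apply/ffunP => c; rewrite ffunE; apply/permP => x.
case: (boolP (x \in Fb c)) => hx.
  rewrite restr_permE ?stab_N // permE.
  by move: hx; rewrite inE => /eqP ->.
by rewrite !(out_perm _ hx) // restr_perm_on.
Qed.

Lemma card_stab : #|stab| = vmult J.
Proof.
rewrite -(card_in_imset Phi_inj) Phi_im cardsE.
have := card_family (fun c : 'I_b => (perm_on (Fb c) : pred 'S_r)).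
move=> e.
transitivity #|(family (fun c : 'I_b => (perm_on (Fb c) : pred 'S_r)) : simpl_pred {ffun 'I_b -> 'S_r})|.
  by apply: eq_card => g; rewrite !inE; apply/forallP/familyP.
rewrite e foldrE big_map big_enum /vmult; apply: eq_bigr => c _.
by rewrite card_perm.
Qed.
End Stab.


Lemma natCC (n : nat) : (n%:R : CC) = 0 -> n = 0%N.
Proof.
have := rmorph_nat (real_complex Rdefinitions.R) n.
move=> e h.
have : (real_complex Rdefinitions.R (n%:R)) = real_complex _ 0.
  by rewrite e raddf0.
move/(congr1 (@complex.Re _)) => /= /eqP.
by rewrite pnatr_eq0 => /eqP.
Qed.

Definition leO (m : nat) : rel 'I_m := fun x y => (x <= y)%N.

Lemma leO_trans m : transitive (@leO m).
Proof. by move=> x y z; rewrite /leO; apply: leq_trans. Qed.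
Lemma leO_anti m : antisymmetric (@leO m).
Proof. by move=> x y; rewrite /leO => /anti_leq /val_inj. Qed.
Lemma leO_total m : total (@leO m).
Proof. by move=> x y; rewrite /leO leq_total. Qed.

Lemma sorted_nondecr r m (J : 'I_r -> 'I_m) :
  sorted (@leO m) [tuple J t | t < r] -> nondecr J.
Proof.
move=> hs; apply/forallP => x; apply/forallP => y; apply/implyP => hxy.
have := sorted_leq_nth (@leO_trans m) (fun z => leqnn (val z)) (J x) hs.
move=> /(_ x y); rewrite !inE size_tuple !ltn_ord => /(_ isT isT hxy).
by rewrite !nth_mktuple.
Qed.

Lemma nondecr_sorted r m (J : 'I_r -> 'I_m) :
  nondecr J -> sorted (@leO m) [tuple J t | t < r].
Proof.
move=> hJ; case: r J hJ => [|r] J hJ; first by rewrite tuple0.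
rewrite sorted_pairwise; last exact: leO_trans.
apply/(pairwiseP (J ord0)) => x y; rewrite !inE size_tuple => hx hy hxy.
have := nth_mktuple J (J ord0) (Ordinal hx); have := nth_mktuple J (J ord0) (Ordinal hy).
rewrite /= => -> ->.
by move/forallP: hJ => /(_ (Ordinal hx)) /forallP /(_ (Ordinal hy)) /implyP; apply; apply: ltnW.
Qed.

Lemma nondecr_uniq r m (J1 J2 : 'I_r -> 'I_m) (pi : 'S_r) :
  nondecr J1 -> nondecr J2 -> (forall t, J1 t = J2 (pi t)) -> forall t, J1 t = J2 t.
Proof.
move=> h1 h2 e.
have hp : perm_eq [tuple J1 t | t < r] [tuple J2 t | t < r].
  apply/tuple_permP; exists pi; congr val.
  by apply: eq_from_tnth => i; rewrite !tnth_mktuple e.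
have := sorted_eq (@leO_trans m) (@leO_anti m) (nondecr_sorted h1) (nondecr_sorted h2) hp.
move/val_inj => E t.
by have := congr1 (fun T => tnth T t) E; rewrite !tnth_mktuple.
Qed.

Lemma sort_exists r m (j : 'I_r -> 'I_m) : exists p : 'S_r, nondecr (fun t => j (p t)).
Proof.
set T := [tuple j t | t < r].
have hp : perm_eq (sort (@leO m) T) T by rewrite perm_sort.
have [p hpe] := tuple_permP hp.
exists p; apply: sorted_nondecr.
have -> : [tuple j (p t) | t < r] = [tuple tnth T (p i) | i < r].
  by apply: eq_from_tnth => i; rewrite !tnth_mktuple.
rewrite -hpe; apply: sort_sorted; exact: leO_total.
Qed.

Lemma nondecr_ext r m (J1 J2 : 'I_r -> 'I_m) : J1 =1 J2 -> nondecr J1 = nondecr J2.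
Proof.
move=> e; rewrite /nondecr; apply: eq_forallb => x; apply: eq_forallb => y.
by rewrite !e.
Qed.

Section Reidx.
Variables (r m : nat).
Definition hJ (J : {ffun 'I_r -> 'I_m}) (tau : 'S_r) : {ffun 'I_r -> 'I_m} :=
  [ffun t => J (tau t)].
Definition cnt (J j : {ffun 'I_r -> 'I_m}) : nat := #|[set tau : 'S_r | hJ J tau == j]|.

Lemma cnt_J0 (j : {ffun 'I_r -> 'I_m}) (p : 'S_r) :
  cnt [ffun t => j (p t)] j = #|stab [ffun t => j (p t)]|.
Proof.
rewrite /cnt -(card_preimset (stab _) (mulgI p)); apply: eq_card => tau.
rewrite !inE; apply/eqP/forallP.
  move=> e u; rewrite permM.
  have := congr1 (fun f : {ffun 'I_r -> 'I_m} => f (p u)) e.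
  by rewrite /hJ /= !ffunE => ->.
move=> h; apply/ffunP => t; rewrite /hJ !ffunE.
have := h (p^-1 t)%g; rewrite permM permKV !ffunE => /eqP ->.
by rewrite permKV.
Qed.

Lemma cnt_other (J j : {ffun 'I_r -> 'I_m}) (p : 'S_r) :
  nondecr J -> nondecr (fun t => j (p t)) -> J != [ffun t => j (p t)] -> cnt J j = 0%N.
Proof.
move=> h1 h2 hne; apply/eqP; rewrite cards_eq0; apply/eqP/setP => tau.
rewrite !inE; apply/negbTE/negP => /eqP e.
have E : forall t, J t = j (p ((tau^-1 * p^-1)%g t)).
  move=> t; rewrite permM permKV -e /hJ ffunE permKV //.
have := nondecr_uniq h1 h2 E => E2.
by move/eqP: hne; apply; apply/ffunP => t; rewrite ffunE E2.
Qed.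

Lemma vmult_neq0 (J : 'I_r -> 'I_m) : (vmult J)%:R != (0 : CC).
Proof.
apply/negP => /eqP /natCC /eqP.
have : (0 < vmult J)%N by rewrite /vmult prodn_gt0 // => c; exact: fact_gt0.
by rewrite lt0n => /negbTE ->.
Qed.

Lemma lemC (j : {ffun 'I_r -> 'I_m}) :
  \sum_(J : {ffun 'I_r -> 'I_m} | nondecr J) (vmult J)%:R^-1 * (cnt J j)%:R = 1 :> CC.
Proof.
have [p hp] := sort_exists j.
set J0 := [ffun t => j (p t)].
have hJ0 : nondecr J0 by rewrite (nondecr_ext (J2 := fun t => j (p t))) // => t; rewrite ffunE.
rewrite (bigD1 J0) //= big1 ?addr0.
  by rewrite cnt_J0 card_stab mulVf // vmult_neq0.
move=> J /andP[hJ hne].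
by rewrite (cnt_other hJ hp hne) mulr0.
Qed.

Lemma reidx (V : lmodType CC) (G : {ffun 'I_r -> 'I_m} -> V) :
  \sum_(J : {ffun 'I_r -> 'I_m} | nondecr J) (vmult J)%:R^-1 *: \sum_(tau : 'S_r) G (hJ J tau)
  = \sum_(j : {ffun 'I_r -> 'I_m}) G j.
Proof.
have E : forall J, \sum_(tau : 'S_r) G (hJ J tau) = \sum_j (cnt J j)%:R *: G j.
  move=> J; rewrite (partition_big (hJ J) xpredT) //=; apply: eq_bigr => j _.
  rewrite (eq_bigr (fun _ => G j)); last by move=> tau /eqP ->.
  rewrite (eq_bigl (fun tau => tau \in [set tau | hJ J tau == j])); last by move=> tau; rewrite inE.
  by rewrite sumr_const scaler_nat.
under eq_bigr do rewrite E scaler_sumr.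
rewrite exchange_big /=; apply: eq_bigr => j _.
under eq_bigr do rewrite scalerA.
by rewrite -scaler_suml lemC scale1r.
Qed.
End Reidx.


Lemma prod_comm_split (R : pzRingType) (I : Type) (s : seq I) (x y : I -> R) :
  (forall t u, y t * x u = x u * y t) ->
  \prod_(t <- s) (x t * y t) = (\prod_(t <- s) x t) * (\prod_(t <- s) y t).
Proof.
move=> hc; elim: s => [|a s IH]; first by rewrite !big_nil mulr1.
rewrite !big_cons IH.
have hcX : y a * \prod_(t <- s) x t = \prod_(t <- s) x t * y a.
  by apply: commr_prod => t _; exact: hc.
by rewrite -!mulrA (mulrA (y a)) hcX !mulrA.
Qed.

Lemma part1 (A : algType CC) (n m s : nat) (q : 'M[CC]_m) (p : 'M[CC]_s)
     (M : 'M[A]_(n, m)) (N : 'M[A]_(m, s)) :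
     parametric q -> parametric p -> manin q p N ->
     (forall i j k l, N i j * M k l = M k l * N i j) ->
     forall (r : nat) (I : 'I_r -> 'I_n) (K : 'I_r -> 'I_s), nondecr K ->
       rperhat p (M *m N) I K =
       \sum_(J : {ffun 'I_r -> 'I_m} | nondecr J)
          rperhat q M I J * rperhat p N J K.
Proof.
move=> hq hp hN hc r I K hK.
pose PM (f : {ffun 'I_r -> 'I_m}) := \prod_(t < r) M (I t) (f t).
pose G (f : {ffun 'I_r -> 'I_m}) := PM f * rper p N f K.
have LHS : rper p (M *m N) I K = \sum_f G f.
  rewrite /rper.
  under eq_bigr => sg _.
    under eq_bigr do rewrite mxE.
    rewrite bigA_distr_bigA /=.
    under eq_bigr => f _.
      rewrite prod_comm_split; last by move=> t u; exact: hc.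
      over.
    rewrite scaler_sumr.
    over.
  rewrite /= exchange_big /=; apply: eq_bigr => f _.
  rewrite /G mulr_sumr; apply: eq_bigr => sg _.
  by rewrite scalerAr.
have RHS : forall J : {ffun 'I_r -> 'I_m},
    rper q M I J * rper p N J K = \sum_(tau : 'S_r) G (hJ J tau).
  move=> J; rewrite {1}/rper mulr_suml; apply: eq_bigr => tau _.
  rewrite -scalerAl scalerAr -(rper_perm hq hp hN hK) /G /PM.
  congr (_ * _).
    by apply: eq_bigr => t _; rewrite ffunE.
  by apply: rper_ext => // t; rewrite ffunE.
rewrite /rperhat LHS -(reidx G) scaler_sumr; apply: eq_bigr => J _.
rewrite -scalerAl -scalerAr !scalerA RHS.
by rewrite mulrC.
Qed.

Theorem mainTheorem12 :
  (forall (A : algType CC) (n m s : nat) (q : 'M[CC]_m) (p : 'M[CC]_s)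
     (M : 'M[A]_(n, m)) (N : 'M[A]_(m, s)),
     parametric q -> parametric p -> manin q p N ->
     (forall i j k l, N i j * M k l = M k l * N i j) ->
     forall (r : nat) (I : 'I_r -> 'I_n) (K : 'I_r -> 'I_s), nondecr K ->
       rperhat p (M *m N) I K =
       \sum_(J : {ffun 'I_r -> 'I_m} | nondecr J)
          rperhat q M I J * rperhat p N J K)
  /\
  (forall (A : algType CC) (n : nat) (q p : 'M[CC]_n) (M N : 'M[A]_n),
     parametric q -> parametric p -> manin q p N ->
     (forall i j k l, N i j * M k l = M k l * N i j) ->
     rperhat_sq p (M *m N) =
     \sum_(J : {ffun 'I_n -> 'I_n} | nondecr J)
        rperhat q M id J * rperhat p N J id).
Proof.
split; first exact: part1.
move=> A n q p M N hq hp hN hc; rewrite /rperhat_sq.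
apply: part1 => //.
by apply/forallP => x; apply/forallP => y; apply/implyP.
Qed.
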